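(* Let $n\ge 1$. Every $X$-circuit $M$ on $n$ qubits satisfies $M\bullet(Z\otimes I\otimes\cdots\otimes I)=I\otimes\cdots\otimes I\otimes Z$.
   Context: Matrices: $X=\begin{bmatrix}0&1\\1&0\end{bmatrix}$, $Z=\begin{bmatrix}1&0\\0&-1\end{bmatrix}$, $H=\frac{1}{\sqrt2}\begin{bmatrix}1&1\\1&-1\end{bmatrix}$, $CZ=\mathrm{diag}(1,1,1,-1)$. Operators on $n$ qubits act on $(\mathbb{R}^2)^{\otimes n}$, qubit $1$ being the first tensor factor; a one-qubit gate on qubit $i$, or a two-qubit gate on qubits $i,i+1$ (with qubit $i$ the first tensor factor of the gate, called its upper qubit), denotes that matrix tensored with identities on the other qubits. For matrices $C,P$, $C\bullet P=CPC^{-1}$. A circuit is a finite sequence of gates $g_1,\dots,g_k$ ($g_1$ applied first); its operator is $g_k\cdots g_1$, and $M\bullet P$ means (operator of $M$)$\bullet P$. Derived generators (formal symbols with defining gate sequences; in a two-qubit symbol subscript $1$ is the upper, $2$ the lower qubit; '';'' separates steps): $E_1$ = empty, $E_2$ = $Z$; $D_1$ = $CZ;\,H_1,H_2;\,CZ;\,H_1,H_2;\,CZ;\,H_2$; $D_2$ = $H_1;\,CZ;\,H_1,H_2;\,CZ;\,H_2$; $D_3$ = $H_1,H_2;\,CZ;\,H_1,H_2;\,CZ;\,H_2$; $D_4$ = $H_1;\,CZ;\,H_1,H_2;\,CZ;\,H_2;\,CZ$. An $X$-circuit on $n$ qubits is a sequence of symbols of the form $D_{d_1}$ on qubits $1,2$,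 then $D_{d_2}$ on qubits $2,3$, ..., then $D_{d_{n-1}}$ on qubits $n-1,n$, then $E_e$ on qubit $n$ (for $n=1$ it is just $E_e$), with $d_i\in\{1,2,3,4\}$, $e\in\{1,2\}$. *)

(* Defs.v *)
From HB Require Import structures.
From mathcomp Require Import all_boot all_order all_algebra.
From mathcomp Require Import reals.
Set Implicit Arguments. Unset Strict Implicit. Unset Printing Implicit Defensive.
Import Order.TTheory GRing.Theory Num.Theory.
Local Open Scope ring_scope.

Section Gates.
Variable R : realType.

(* basic one- and two-qubit matrices; basis index 0 = |0>, 1 = |1>;
   for two qubits, index 2*a+b = |a b> with a the upper (first) qubit *)
Definition Xm : 'M[R]_2 := \matrix_(i, j) (if i != j :> nat then 1 else 0).
Definition Zm : 'M[R]_2 := \matrix_(i, j) (if i == j :> nat then (if i == 0 :> nat then 1 else -1) else 0).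
Definition Hm : 'M[R]_2 :=
  (Num.sqrt 2)^-1 *: \matrix_(i, j) (if (i == 1 :> nat) && (j == 1 :> nat) then -1 else 1).
Definition CZm : 'M[R]_4 :=
  \matrix_(i, j) (if i == j :> nat then (if i == 3 :> nat then -1 else 1) else 0).

(* Computational basis of (R^2)^{\otimes n}: index r < 2^n, qubit i (1 <= i <= n)
   is the bit of weight 2^(n-i), so qubit 1 is the first (most significant)
   tensor factor. *)
Definition qbit (n i r : nat) : nat := odd (r %/ 2 ^ (n - i)).

Definition agree_outside (n : nat) (P : nat -> bool) (r c : nat) : bool :=
  [forall j : 'I_n, ~~ P j.+1 ==> (qbit n j.+1 r == qbit n j.+1 c)].

(* U on qubit i tensored with identities on the other qubits (entrywise
   unfolding of the Kronecker product I ⊗ ... ⊗ U ⊗ ... ⊗ I) *)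
Definition gate1 (n i : nat) (U : 'M[R]_2) : 'M[R]_(2 ^ n) :=
  \matrix_(r, c)
    (if agree_outside n (pred1 i) r c
     then U (inord (qbit n i r)) (inord (qbit n i c)) else 0).

(* G on qubits i, i+1 (qubit i = upper = first tensor factor of G) *)
Definition gate2 (n i : nat) (G : 'M[R]_4) : 'M[R]_(2 ^ n) :=
  \matrix_(r, c)
    (if agree_outside n (fun j => (j == i) || (j == i.+1)) r c
     then G (inord (2 * qbit n i r + qbit n i.+1 r))
            (inord (2 * qbit n i c + qbit n i.+1 c))
     else 0).

(* circuits: g_1 applied first; operator g_k ... g_1 *)
Definition circuit_op (n : nat) (s : seq 'M[R]_(2 ^ n)) : 'M[R]_(2 ^ n) :=
  foldl (fun acc g => g *m acc) 1%:M s.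

Definition bul (m : nat) (C P : 'M[R]_m) : 'M[R]_m := C *m P *m invmx C.

Inductive Dsym := D1 | D2 | D3 | D4.
Inductive Esym := E1 | E2.

Definition Dgates (n i : nat) (d : Dsym) : seq 'M[R]_(2 ^ n) :=
  let cz := gate2 n i CZm in
  let h1 := gate1 n i Hm in
  let h2 := gate1 n i.+1 Hm in
  match d with
  | D1 => [:: cz; h1; h2; cz; h1; h2; cz; h2]
  | D2 => [:: h1; cz; h1; h2; cz; h2]
  | D3 => [:: h1; h2; cz; h1; h2; cz; h2]
  | D4 => [:: h1; cz; h1; h2; cz; h2; cz]
  end.

Definition Egates (n i : nat) (e : Esym) : seq 'M[R]_(2 ^ n) :=
  match e with
  | E1 => [::]
  | E2 => [:: gate1 n i Zm]
  end.

(* the X-circuit D_{d_1} on (1,2), ..., D_{d_{n-1}} on (n-1,n), then E_e on n,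
   expanded into its gate sequence; ds = [:: d_1; ...; d_{n-1}] *)
Definition xcircuit (n : nat) (ds : seq Dsym) (e : Esym) : seq 'M[R]_(2 ^ n) :=
  flatten [seq Dgates n p.1 p.2 | p <- zip (iota 1 n.-1) ds] ++ Egates n n e.

End Gates.

(* Main.v *)
Require Import Defs.
From HB Require Import structures.
From mathcomp Require Import all_boot all_order all_algebra.
From mathcomp Require Import reals.
From mathcomp Require Import zify ring lra.
Import Order.TTheory GRing.Theory Num.Theory.
Local Open Scope ring_scope.
Set Implicit Arguments. Unset Strict Implicit. Unset Printing Implicit Defensive.

Lemma bits_eq m x y : (x < 2 ^ m)%N -> (y < 2 ^ m)%N ->
  (forall t, (t < m)%N -> odd (x %/ 2 ^ t) = odd (y %/ 2 ^ t)) -> x = y.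
Proof.
elim: m x y => [|m IH] x y.
  by rewrite expn0 !ltnS !leqn0 => /eqP -> /eqP ->.
move=> hx hy hb.
have h0 := hb 0%N (ltn0Sn _); rewrite expn0 !divn1 in h0.
have hh : x./2 = y./2.
  apply: IH.
  - by rewrite -divn2 ltn_divLR // -expnSr.
  - by rewrite -divn2 ltn_divLR // -expnSr.
  move=> t ht; rewrite -!divn2 -!divnMA -!expnS; exact: hb.
by rewrite -[x]odd_double_half -[y]odd_double_half h0 hh.
Qed.

Section Bits.
Variable n : nat.

Definition bitsf (k : nat) : {ffun 'I_n -> bool} :=
  [ffun j : 'I_n => odd (k %/ 2 ^ (n - j.+1))].

Lemma qbitE (j : 'I_n) (r : nat) : qbit n j.+1 r = bitsf r j.
Proof. by rewrite /qbit ffunE. Qed.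

Lemma bitsf_inj : injective (fun k : 'I_(2 ^ n) => bitsf k).
Proof.
move=> x y /ffunP H; apply/val_inj; apply: (@bits_eq n); [exact: ltn_ord|exact: ltn_ord|] => t ht.
have hj : (n - t.+1 < n)%N by lia.
have := H (Ordinal hj); rewrite !ffunE /=.
by have -> : (n - (n - t.+1).+1 = t)%N by lia.
Qed.

Lemma bitsf_bij : bijective (fun k : 'I_(2 ^ n) => bitsf k).
Proof.
apply: inj_card_bij; first exact: bitsf_inj.
by rewrite card_ffun card_bool !card_ord.
Qed.

Lemma pos2n : (0 < 2 ^ n)%N. Proof. by rewrite expn_gt0. Qed.

Definition binv (f : {ffun 'I_n -> bool}) : 'I_(2 ^ n) :=
  odflt (Ordinal pos2n) [pick k : 'I_(2 ^ n) | bitsf k == f].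

Lemma binvK f : bitsf (binv f) = f.
Proof.
rewrite /binv; case: pickP => [k /eqP //|H].
have [g _ gK] := bitsf_bij.
by move: (H (g f)); rewrite gK eqxx.
Qed.

Lemma bitsfK (k : 'I_(2 ^ n)) : binv (bitsf k) = k.
Proof. by apply: bitsf_inj; rewrite binvK. Qed.

Lemma binv_bij : bijective binv.
Proof. by exists (fun k : 'I_(2 ^ n) => bitsf k) => [f|k]; rewrite ?binvK ?bitsfK. Qed.

Lemma agreeE P (r c : nat) : agree_outside n P r c =
  [forall j : 'I_n, ~~ P j.+1 ==> (bitsf r j == bitsf c j)].
Proof.
apply: eq_forallb => j; rewrite !qbitE.
by case: (bitsf r j); case: (bitsf c j).
Qed.

Lemma agree_trans P (r k c : nat) : agree_outside n P r k ->
  agree_outside n P k c = agree_outside n P r c.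
Proof.
rewrite !agreeE => /forallP h; apply: eq_forallb => j.
by case: (P j.+1) (h j) => //= /eqP ->.
Qed.

Lemma bits_eqE (r c : 'I_(2 ^ n)) : (r == c) = [forall t, bitsf r t == bitsf c t].
Proof.
apply/eqP/forallP => [->//|h]; apply: bitsf_inj; apply/ffunP => t; exact/eqP.
Qed.

Variable R : realType.

Lemma sum_agree P (r : nat) (F : 'I_(2 ^ n) -> R) :
  \sum_(k < 2 ^ n) (if agree_outside n P r k then F k else 0) =
  \sum_(f : {ffun 'I_n -> bool} | [forall j : 'I_n, ~~ P j.+1 ==> (bitsf r j == f j)])
     F (binv f).
Proof.
rewrite -big_mkcond /= (reindex binv) /=; last exact: onW_bij binv_bij.
by apply: eq_bigl => f; rewrite agreeE binvK.
Qed.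

Lemma sum_local (L : finType) (C : pred {ffun 'I_n -> bool})
  (loc : {ffun 'I_n -> bool} -> L) (upd : L -> {ffun 'I_n -> bool}) (H : L -> R) :
  (forall l, C (upd l)) -> (forall l, loc (upd l) = l) ->
  (forall g, C g -> upd (loc g) = g) ->
  \sum_(g | C g) H (loc g) = \sum_l H l.
Proof.
move=> hC hl hg; rewrite (reindex_onto upd loc) /=; last by move=> g /hg.
by apply: eq_big => l; rewrite ?hC ?hl ?eqxx.
Qed.

End Bits.
Arguments agree_trans {n P r k c}.

Section G.
Variable R : realType.

Lemma sum2 (F : 'I_2 -> R) : \sum_(b : bool) F (inord b) = \sum_(m < 2) F m.
Proof.
rewrite big_bool !big_ord_recr big_ord0 /= add0r addrC.
congr (F _ + F _); apply/val_inj; rewrite /= ?inordK //.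
Qed.

Lemma sum4 (F : 'I_4 -> R) :
  \sum_(p : bool * bool) F (inord (2 * p.1 + p.2)) = \sum_(m < 4) F m.
Proof.
transitivity (\sum_(a : bool) \sum_(b : bool) F (inord (2 * a + b))).
  by rewrite pair_big.
rewrite !big_bool !big_ord_recr big_ord0 /= add0r.
rewrite [LHS]addrC [X in X + _ = _]addrC [X in _ + X = _]addrC -!addrA.
congr (F _ + (F _ + (F _ + F _))); apply/val_inj; rewrite /= ?inordK //.
Qed.



Variable n : nat.

Lemma gate1M (j : 'I_n) (U V : 'M[R]_2) :
  gate1 n j.+1 U *m gate1 n j.+1 V = gate1 n j.+1 (U *m V).
Proof.
apply/matrixP => r c; rewrite !mxE.
under eq_bigr => k _ do rewrite !mxE.
case: (boolP (agree_outside n (pred1 j.+1) r c)) => hrc; last first.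
  apply: big1 => k _; case: (boolP (agree_outside n (pred1 j.+1) r k)) => h.
    by rewrite (agree_trans h) (negbTE hrc) mulr0.
  by rewrite mul0r.
rewrite (eq_bigr (fun k : 'I_(2 ^ n) => if agree_outside n (pred1 j.+1) r k then
   U (inord (qbit n j.+1 r)) (inord (qbit n j.+1 k)) *
   V (inord (qbit n j.+1 k)) (inord (qbit n j.+1 c)) else 0)); last first.
  move=> k _; case: (boolP (agree_outside n (pred1 j.+1) r k)) => h.
    by rewrite (agree_trans h) hrc.
  by rewrite mul0r.
rewrite sum_agree.
under eq_bigr => f _ do rewrite [qbit n j.+1 (binv f)]qbitE binvK.
rewrite (@sum_local n R bool _ (fun f => f j)
   (fun b => [ffun t => if t == j then b else bitsf n r t])
   (fun b : bool => U (inord (qbit n j.+1 r)) (inord b) * V (inord b) (inord (qbit n j.+1 c)))).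
- by rewrite -(sum2 (fun m => U _ m * V m _)).
- move=> b; apply/forallP => t; case: (eqVneq t j) => [->|ne]; first by rewrite /= eqxx.
  by rewrite !ffunE (negbTE ne) eqxx implybT.
- by move=> b; rewrite ffunE eqxx.
move=> g /forallP h; apply/ffunP => t; rewrite ffunE; case: (eqVneq t j) => [->//|ne].
have ne' : (t.+1 == j.+1) = false by rewrite eqSS; exact: negbTE ne.
by have := h t; rewrite /= ne' /= => /eqP.
Qed.


Lemma gate2M (j : 'I_n) (hj : (j.+1 < n)%N) (G G' : 'M[R]_4) :
  gate2 n j.+1 G *m gate2 n j.+1 G' = gate2 n j.+1 (G *m G').
Proof.
set jp := Ordinal hj.
have qE2 r : qbit n j.+2 r = bitsf n r jp := qbitE jp r.
have njp : (jp == j) = false by apply/eqP => /(congr1 val) /=; lia.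
apply/matrixP => r c; rewrite !mxE.
under eq_bigr => k _ do rewrite !mxE.
set P := (fun t : nat => (t == j.+1) || (t == j.+2)).
case: (boolP (agree_outside n P r c)) => hrc; last first.
  apply: big1 => k _; case: (boolP (agree_outside n P r k)) => h.
    by rewrite (agree_trans h) (negbTE hrc) mulr0.
  by rewrite mul0r.
rewrite (eq_bigr (fun k : 'I_(2 ^ n) => if agree_outside n P r k then
   G (inord (2 * qbit n j.+1 r + qbit n j.+2 r)) (inord (2 * qbit n j.+1 k + qbit n j.+2 k)) *
   G' (inord (2 * qbit n j.+1 k + qbit n j.+2 k)) (inord (2 * qbit n j.+1 c + qbit n j.+2 c)) else 0)); last first.
  move=> k _; case: (boolP (agree_outside n P r k)) => h.
    by rewrite (agree_trans h) hrc.
  by rewrite mul0r.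
rewrite sum_agree.
under eq_bigr => f _ do rewrite [qbit n j.+1 (binv f)]qbitE [qbit n j.+2 (binv f)]qE2 !binvK.
rewrite (@sum_local n R (bool * bool)%type _ (fun f => (f j, f jp))
   (fun p => [ffun t => if t == j then p.1 else if t == jp then p.2 else bitsf n r t])
   (fun p : bool * bool => G (inord (2 * qbit n j.+1 r + qbit n j.+2 r)) (inord (2 * p.1 + p.2)) *
        G' (inord (2 * p.1 + p.2)) (inord (2 * qbit n j.+1 c + qbit n j.+2 c)))).
- by rewrite -(sum4 (fun m => G _ m * G' m _)).
- move=> p; apply/forallP => t; case: (eqVneq t j) => [->|ne]; first by rewrite /P /= eqxx.
  case: (eqVneq t jp) => [->|ne2]; first by rewrite /P /= eqxx orbT.
  by rewrite !ffunE (negbTE ne) (negbTE ne2) eqxx implybT.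
- by case=> a b; rewrite !ffunE eqxx njp eqxx.
move=> g /forallP h; apply/ffunP => t; rewrite ffunE.
case: (eqVneq t j) => [->//|ne]; case: (eqVneq t jp) => [->//|ne2].
have ne' : P t.+1 = false.
  rewrite /P !eqSS; apply/negbTE; rewrite negb_or; apply/andP; split; first exact: ne.
  by move: ne2; rewrite -val_eqE.
by have := h t; rewrite ne' /= => /eqP.
Qed.


Lemma agree_ext (P P' : pred nat) (r c : nat) : P =1 P' ->
  agree_outside n P r c = agree_outside n P' r c.
Proof. by move=> H; rewrite /agree_outside; apply: eq_forallb => t; rewrite H. Qed.

Lemma agree_split (P : pred nat) (q : 'I_n) (r c : nat) : P q.+1 ->
  agree_outside n (fun t => P t && (t != q.+1)) r c =
  agree_outside n P r c && (bitsf n r q == bitsf n c q).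
Proof.
move=> hq; rewrite !agreeE; apply/forallP/andP => [h|[/forallP h hq2] t].
  split; last by have := h q; rewrite eqxx andbF.
  by apply/forallP => t; apply/implyP => hP; apply: (implyP (h t)); rewrite negb_and hP.
apply/implyP; rewrite negb_and negbK => /orP [hP|/eqP e]; first exact: (implyP (h t) hP).
move: e => [e]; have -> : t = q by apply: val_inj.
exact: hq2.
Qed.

Lemma agree0 (r c : 'I_(2 ^ n)) : agree_outside n pred0 r c = (r == c).
Proof. by rewrite agreeE bits_eqE. Qed.

Definition kronL (U : 'M[R]_2) : 'M[R]_4 :=
  \matrix_(x < 4, y < 4) (U (inord (2 <= x)%N) (inord (2 <= y)%N) * (odd x == odd y)%:R).
Definition kronR (U : 'M[R]_2) : 'M[R]_4 :=
  \matrix_(x < 4, y < 4) (((2 <= x)%N == (2 <= y)%N)%:R * U (inord (odd x)) (inord (odd y))).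

Lemma gate1_1 (j : 'I_n) : gate1 n j.+1 (1%:M : 'M[R]_2) = 1%:M.
Proof.
apply/matrixP => r c; rewrite !mxE -agree0.
rewrite (@agree_ext pred0 (fun t => pred1 j.+1 t && (t != j.+1))); last first.
  by move=> t /=; case: eqP.
rewrite agree_split /=; last by [].
case: (agree_outside _ _ _ _) => //=; rewrite !qbitE.
by case: (bitsf n r j); case: (bitsf n c j); rewrite /= -val_eqE /= ?inordK.
Qed.

Lemma gate1_kronL (j : 'I_n) (hj : (j.+1 < n)%N) (U : 'M[R]_2) :
  gate1 n j.+1 U = gate2 n j.+1 (kronL U).
Proof.
set jp := Ordinal hj.
have qE2 r : qbit n j.+2 r = bitsf n r jp := qbitE jp r.
apply/matrixP => r c; rewrite !mxE.
rewrite (@agree_ext (pred1 j.+1) (fun t => ((t == j.+1) || (t == j.+2)) && (t != jp.+1))); last first.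
  move=> t /=; case: (eqVneq t j.+1) => [->|ne] /=.
    by apply/esym/negP => /eqP; lia.
  by case: (t == j.+2).
rewrite agree_split /=; last by rewrite eqxx orbT.
case: (agree_outside _ _ _ _) => //=; rewrite !qbitE !qE2.
case: (bitsf n r j); case: (bitsf n c j); case: (bitsf n r jp); case: (bitsf n c jp);
  by rewrite /= ?inordK //= ?mulr1 ?mulr0.
Qed.

Lemma gate1_kronR (j : 'I_n) (hj : (j.+1 < n)%N) (U : 'M[R]_2) :
  gate1 n j.+2 U = gate2 n j.+1 (kronR U).
Proof.
set jp := Ordinal hj.
have qE2 r : qbit n j.+2 r = bitsf n r jp := qbitE jp r.
apply/matrixP => r c; rewrite !mxE.
rewrite (@agree_ext (pred1 j.+2) (fun t => ((t == j.+1) || (t == j.+2)) && (t != j.+1))); last first.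
  move=> t /=; case: (eqVneq t j.+1) => [->|ne] /=.
    by apply/negP => /eqP; lia.
  by rewrite andbT.
rewrite agree_split /=; last by rewrite eqxx.
case: (agree_outside _ _ _ _) => //=; rewrite !qbitE !qE2.
case: (bitsf n r j); case: (bitsf n c j); case: (bitsf n r jp); case: (bitsf n c jp);
  by rewrite /= ?inordK //= ?mul1r ?mul0r.
Qed.

End G.

Section K.
Variable R : realType.
Lemma e0 : widen_ord (leqnSn 1) ord_max = inord 0 :> 'I_2.
Proof. by apply/val_inj; rewrite /= inordK. Qed.
Lemma e1 : ord_max = inord 1 :> 'I_2.
Proof. by apply/val_inj; rewrite /= inordK. Qed.
Lemma i01 : (inord 0 == inord 1 :> 'I_2) = false.
Proof. by rewrite -val_eqE /= !inordK. Qed.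
Lemma i10 : (inord 1 == inord 0 :> 'I_2) = false.
Proof. by rewrite -val_eqE /= !inordK. Qed.

Definition kron2 (U V : 'M[R]_2) : 'M[R]_4 :=
  \matrix_(x < 4, y < 4) (U (inord (2 <= x)%N) (inord (2 <= y)%N) * V (inord (odd x)) (inord (odd y))).

Ltac step := rewrite ?mxE ?big_ord_recr ?big_ord0 /= ?mxE ?big_ord_recr ?big_ord0 /= ?mxE ?big_ord_recr ?big_ord0 /= ?mxE;
 rewrite ?inordK //= ?mxE ?inordK //= ?e0 ?e1 ?i01 ?i10 ?eqxx.

Lemma kronLM (U V : 'M[R]_2) : kronL U *m kronL V = kronL (U *m V).
Proof.
apply/matrixP;
  case => [[|[|[|[|?]]]] ?] //; case => [[|[|[|[|?]]]] ?] //.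
all: step.
all: ring.
Qed.
Lemma kronRM (U V : 'M[R]_2) : kronR U *m kronR V = kronR (U *m V).
Proof.
apply/matrixP;
  case => [[|[|[|[|?]]]] ?] //; case => [[|[|[|[|?]]]] ?] //.
all: step.
all: ring.
Qed.
Lemma kronLR (U V : 'M[R]_2) : kronL U *m kronR V = kronR V *m kronL U.
Proof.
apply/matrixP;
  case => [[|[|[|[|?]]]] ?] //; case => [[|[|[|[|?]]]] ?] //.
all: step.
all: ring.
Qed.
Lemma kronLR2 (U V : 'M[R]_2) : kronL U *m kronR V = kron2 U V.
Proof.
apply/matrixP;
  case => [[|[|[|[|?]]]] ?] //; case => [[|[|[|[|?]]]] ?] //.
all: step.
all: ring.
Qed.
Lemma cz_z1 : CZm R *m kronL (Zm R) = kronL (Zm R) *m CZm R.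
Proof.
apply/matrixP;
  case => [[|[|[|[|?]]]] ?] //; case => [[|[|[|[|?]]]] ?] //.
all: step.
all: ring.
Qed.
Lemma cz_z2 : CZm R *m kronR (Zm R) = kronR (Zm R) *m CZm R.
Proof.
apply/matrixP;
  case => [[|[|[|[|?]]]] ?] //; case => [[|[|[|[|?]]]] ?] //.
all: step.
all: ring.
Qed.
Lemma cz_x1 : CZm R *m kronL (Xm R) = kron2 (Xm R) (Zm R) *m CZm R.
Proof.
apply/matrixP;
  case => [[|[|[|[|?]]]] ?] //; case => [[|[|[|[|?]]]] ?] //.
all: step.
all: ring.
Qed.
Lemma cz_z1x2 : CZm R *m kron2 (Zm R) (Xm R) = kronR (Xm R) *m CZm R.
Proof.
apply/matrixP;
  case => [[|[|[|[|?]]]] ?] //; case => [[|[|[|[|?]]]] ?] //.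
all: step.
all: ring.
Qed.
Lemma cz_cz : CZm R *m CZm R = 1%:M.
Proof.
apply/matrixP;
  case => [[|[|[|[|?]]]] ?] //; case => [[|[|[|[|?]]]] ?] //.
all: step.
all: ring.
Qed.
Lemma kronL1 : kronL (1%:M : 'M[R]_2) = 1%:M.
Proof.
apply/matrixP;
  case => [[|[|[|[|?]]]] ?] //; case => [[|[|[|[|?]]]] ?] //.
all: step.
all: (by rewrite /= ?mulr1 ?mulr0).
Qed.

Ltac step2 := rewrite ?mxE ?big_ord_recr ?big_ord0 /= ?mxE ?inordK //=.

Lemma zz : Zm R *m Zm R = 1%:M.
Proof.
apply/matrixP; case => [[|[|?]] ?] //; case => [[|[|?]] ?] //; step2; ring.
Qed.

Lemma hh : Hm R *m Hm R = 1%:M.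
Proof.
have s2 : (Num.sqrt 2)^-1 * (Num.sqrt 2)^-1 = 2^-1 :> R.
  by rewrite -invfM -expr2 sqr_sqrtr.
apply/matrixP; case => [[|[|?]] ?] //; case => [[|[|?]] ?] //; step2.
all: nra.
Qed.

Lemma hz : Hm R *m Zm R = Xm R *m Hm R.
Proof.
apply/matrixP; case => [[|[|?]] ?] //; case => [[|[|?]] ?] //; step2; ring.
Qed.

Lemma hx : Hm R *m Xm R = Zm R *m Hm R.
Proof.
apply/matrixP; case => [[|[|?]] ?] //; case => [[|[|?]] ?] //; step2; ring.
Qed.

Lemma h1_z1 : kronL (Hm R) *m kronL (Zm R) = kronL (Xm R) *m kronL (Hm R).
Proof. by rewrite !kronLM hz. Qed.

Lemma h1_x1z2 : kronL (Hm R) *m kron2 (Xm R) (Zm R) = kron2 (Zm R) (Zm R) *m kronL (Hm R).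
Proof.
rewrite -!kronLR2 mulmxA kronLM hx -kronLM -!mulmxA.
by rewrite [kronL (Hm R) *m _]kronLR.
Qed.

Lemma h2_x1 : kronR (Hm R) *m kronL (Xm R) = kronL (Xm R) *m kronR (Hm R).
Proof. by rewrite kronLR. Qed.

Lemma h2_z1z2 : kronR (Hm R) *m kron2 (Zm R) (Zm R) = kron2 (Zm R) (Xm R) *m kronR (Hm R).
Proof.
rewrite -!kronLR2 mulmxA -kronLR -mulmxA kronRM hz -kronRM.
by rewrite mulmxA.
Qed.

Lemma h2_x2 : kronR (Hm R) *m kronR (Xm R) = kronR (Zm R) *m kronR (Hm R).
Proof. by rewrite !kronRM hx. Qed.
End K.

Section Main.
Variable R : realType.
Variable n : nat.
Local Notation M := 'M[R]_(2 ^ n).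

Lemma circ_foldl (A : M) s :
  foldl (fun acc g => g *m acc) A s = circuit_op s *m A.
Proof.
elim: s A => [|g s IH] A /=; first by rewrite /circuit_op /= mul1mx.
by rewrite /circuit_op /= !IH mulmx1 mulmxA.
Qed.

Lemma circ_cons (g : M) s : circuit_op (g :: s) = circuit_op s *m g.
Proof. by rewrite {1}/circuit_op /= circ_foldl mulmx1. Qed.

Lemma circ_cat (s1 s2 : seq M) : circuit_op (s1 ++ s2) = circuit_op s2 *m circuit_op s1.
Proof. by rewrite {1}/circuit_op foldl_cat circ_foldl. Qed.

Lemma cp_cons (g : M) s P Q S : g *m P = Q *m g ->
  circuit_op s *m Q = S *m circuit_op s ->
  circuit_op (g :: s) *m P = S *m circuit_op (g :: s).
Proof. by move=> h1 h2; rewrite circ_cons -mulmxA h1 mulmxA h2 mulmxA. Qed.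

Lemma cp_nil (P : M) : circuit_op [::] *m P = P *m circuit_op [::].
Proof. by rewrite /circuit_op /= mul1mx mulmx1. Qed.

Lemma unit_cons (g : M) s : g \in unitmx -> circuit_op s \in unitmx ->
  circuit_op (g :: s) \in unitmx.
Proof. by move=> h1 h2; rewrite circ_cons unitmx_mul h1 h2. Qed.

Lemma unit_nil : circuit_op ([::] : seq M) \in unitmx.
Proof. by rewrite /circuit_op /= unitmx1. Qed.

Section Pos.
Variables (j : 'I_n) (hj : (j.+1 < n)%N).

Lemma g2rule (G P Q : 'M[R]_4) : G *m P = Q *m G ->
  gate2 n j.+1 G *m gate2 n j.+1 P = gate2 n j.+1 Q *m gate2 n j.+1 G.
Proof. by move=> h; rewrite !gate2M // h. Qed.

Lemma g2unit (G : 'M[R]_4) : G *m G = 1%:M -> gate2 n j.+1 G \in unitmx.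
Proof.
move=> h; have := gate2M hj G G; rewrite h -kronL1 -gate1_kronL // gate1_1.
by case/mulmx1_unit.
Qed.

Lemma g1unit (i : 'I_n) (U : 'M[R]_2) : U *m U = 1%:M -> gate1 n i.+1 U \in unitmx.
Proof.
move=> h; have := gate1M i U U; rewrite h gate1_1.
by case/mulmx1_unit.
Qed.

Lemma Dstep d :
  circuit_op (Dgates R n j.+1 d) *m gate1 n j.+1 (Zm R) =
  gate1 n j.+2 (Zm R) *m circuit_op (Dgates R n j.+1 d)
  /\ circuit_op (Dgates R n j.+1 d) \in unitmx.
Proof.
have hH1 : gate1 n j.+1 (Hm R) \in unitmx := g1unit j (hh R).
have hH2 : gate1 n j.+2 (Hm R) \in unitmx := g1unit (Ordinal hj) (hh R).
have hCZ : gate2 n j.+1 (CZm R) \in unitmx := g2unit (cz_cz R).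
split; last first.
  by case: d; rewrite /Dgates; repeat apply: unit_cons => //; exact: unit_nil.
rewrite (gate1_kronL hj (Zm R)) (gate1_kronR hj (Zm R)).
case: d; rewrite /Dgates /= ?(gate1_kronL hj (Hm R)) ?(gate1_kronR hj (Hm R)).
- apply: cp_cons; first by apply: g2rule; exact: cz_z1.
  apply: cp_cons; first by apply: g2rule; exact: h1_z1.
  apply: cp_cons; first by apply: g2rule; exact: h2_x1.
  apply: cp_cons; first by apply: g2rule; exact: cz_x1.
  apply: cp_cons; first by apply: g2rule; exact: h1_x1z2.
  apply: cp_cons; first by apply: g2rule; exact: h2_z1z2.
  apply: cp_cons; first by apply: g2rule; exact: cz_z1x2.
  apply: cp_cons; first by apply: g2rule; exact: h2_x2.
  exact: cp_nil.
- apply: cp_cons; first by apply: g2rule; exact: h1_z1.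
  apply: cp_cons; first by apply: g2rule; exact: cz_x1.
  apply: cp_cons; first by apply: g2rule; exact: h1_x1z2.
  apply: cp_cons; first by apply: g2rule; exact: h2_z1z2.
  apply: cp_cons; first by apply: g2rule; exact: cz_z1x2.
  apply: cp_cons; first by apply: g2rule; exact: h2_x2.
  exact: cp_nil.
- apply: cp_cons; first by apply: g2rule; exact: h1_z1.
  apply: cp_cons; first by apply: g2rule; exact: h2_x1.
  apply: cp_cons; first by apply: g2rule; exact: cz_x1.
  apply: cp_cons; first by apply: g2rule; exact: h1_x1z2.
  apply: cp_cons; first by apply: g2rule; exact: h2_z1z2.
  apply: cp_cons; first by apply: g2rule; exact: cz_z1x2.
  apply: cp_cons; first by apply: g2rule; exact: h2_x2.
  exact: cp_nil.
- apply: cp_cons; first by apply: g2rule; exact: h1_z1.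
  apply: cp_cons; first by apply: g2rule; exact: cz_x1.
  apply: cp_cons; first by apply: g2rule; exact: h1_x1z2.
  apply: cp_cons; first by apply: g2rule; exact: h2_z1z2.
  apply: cp_cons; first by apply: g2rule; exact: cz_z1x2.
  apply: cp_cons; first by apply: g2rule; exact: h2_x2.
  apply: cp_cons; first by apply: g2rule; exact: cz_z2.
  exact: cp_nil.
Qed.
End Pos.

Lemma chain_all (ds : seq Dsym) (i : nat) : (1 <= i)%N -> (i + size ds = n)%N ->
  let C := circuit_op (flatten [seq Dgates R n p.1 p.2 | p <- zip (iota i (size ds)) ds]) in
  C *m gate1 n i (Zm R) = gate1 n n (Zm R) *m C /\ C \in unitmx.
Proof.
elim: ds i => [|d ds IH] i hi hn /=.
  rewrite addn0 in hn; subst i; split; [exact: cp_nil | exact: unit_nil].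
case: i hi hn IH => [//|k] _ hn IH.
have hk : (k < n)%N by lia.
have hk1 : ((Ordinal hk).+1 < n)%N by rewrite /=; move: hn => /= hn; lia.
have hn2 : (k.+2 + size ds)%N = n by move: hn => /= hn; lia.
have [IH1 IH2] := IH k.+2 erefl hn2.
have [D1 D2] := Dstep hk1 d.
rewrite circ_cat; split; last by rewrite unitmx_mul IH2 D2.
by rewrite -mulmxA D1 mulmxA IH1 mulmxA.
Qed.

End Main.

Unset Implicit Arguments.

Theorem proposition4p13 (R : realType) (n : nat) (hn : (1 <= n)%N)
    (ds : seq Dsym) (hds : size ds = n.-1) (e : Esym) :
  bul (circuit_op (xcircuit R n ds e)) (gate1 n 1 (Zm R)) = gate1 n n (Zm R).
Proof.
have h1 : (1 + size ds)%N = n by rewrite hds; lia.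
have [C1 C2] := @chain_all R n ds 1 erefl h1.
rewrite /bul /xcircuit -hds circ_cat.
set C := circuit_op _ in C1 C2 *.
have [hE1 hE2] : circuit_op (Egates R n n e) *m gate1 n n (Zm R) = gate1 n n (Zm R) *m circuit_op (Egates R n n e) /\ circuit_op (Egates R n n e) \in unitmx.
  clear C C1 C2 h1 hds.
  case: n hn => [//|m] _.
  have hZ : gate1 m.+1 (@ord_max m).+1 (Zm R) \in unitmx := g1unit ord_max (zz R).
  case: e => /=.
    by split; [exact: cp_nil | exact: unit_nil].
  rewrite circ_cons; split; last by rewrite unitmx_mul unit_nil hZ.
  by rewrite /circuit_op /= !mul1mx.
rewrite -[X in X *m invmx _]mulmxA C1 mulmxA hE1 -mulmxA -mulmxA mulmxV ?mulmx1 //.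
by rewrite unitmx_mul hE2 C2.
Qed.
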